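(* $\mathcal{L}_{\mathsf{SAFA}}\subsetneq\mathcal{L}_{\mathsf{CCA}}$: every data language accepted by a SAFA is accepted by some class counting automaton, and some data language accepted by a class counting automaton is accepted by no SAFA.
   Context: $D$ is a fixed countably infinite set of data values; for a finite alphabet $\Sigma$, data languages are subsets of $(\Sigma\times D)^*$. A set augmented finite automaton (SAFA) is a tuple $M=(Q,\Sigma\times D,q_0,F,H,\delta)$: $Q$ finite set of states, $q_0\in Q$ initial, $F\subseteq Q$ final, $H=\{h_1,\dots,h_m\}$ a finite collection of (names of) sets of data values, $\delta\subseteq Q\times\Sigma\times C\times OP\times Q$ with $C=\{p(h_i),\,!p(h_i)\}$, $OP=\{-\}\cup\{\mathsf{ins}(h_i)\}$. Configurations are $(q,\langle S_1,\dots,S_m\rangle)$, $S_i\subseteq D$ finite; initially state $q_0$ and all sets empty. On reading $(a,d)$, a transition $(q,a,\alpha,op,q')$ from the current state may be taken if $\alpha=p(h_i)$ and $d\in S_i$, or $\alpha=\,!p(h_i)$ and $d\notin S_i$; then the state becomes $q'$ and if $op=\mathsf{ins}(h_j)$, $d$ is added to $S_j$. A word is accepted if some run reads it entirely and ends in $F$; $\mathcal{L}_{\mathsf{SAFA}}$ is the class of languages accepted by SAFA. A class counting automaton (CCA) is a tuple $(Q,\Sigma,\delta,q_0,F)$ with finite state set $Q$, initial state $q_0$, final states $F$, and $\delta\subseteq Q\times\Sigma\times C\times\mathit{Inst}\times\mathbb{N}\times Q$, where a constraint in $C$ is a pair $(\mathsf{op},e)$ with $\mathsf{op}\in\{<,>,=,\leq,\geq,\neq\}$,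 $e\in\mathbb{N}$, and $\mathit{Inst}=\{\uparrow^+,\downarrow\}$. The automaton maintains a bag $\beta:D\to\mathbb{N}$, initially $\beta(d)=0$ for all $d$. On reading $(a,d)$ in state $q$ it may take a transition $(q,a,(\mathsf{op},e),\mathit{ins},m,q')$ provided $\beta(d)\ \mathsf{op}\ e$ holds; then $\beta(d)$ is increased by $m$ if $\mathit{ins}=\uparrow^+$, or reset to $m$ if $\mathit{ins}=\downarrow$, and the state becomes $q'$. A word is accepted if some run reads it entirely and ends in $F$. $\mathcal{L}_{\mathsf{CCA}}$ is the class of languages accepted by CCA. *)

(* Defs.v *)
From mathcomp Require Import all_boot.
From Stdlib Require Import List.
Set Implicit Arguments. Unset Strict Implicit. Unset Printing Implicit Defensive.

(* The fixed countably infinite set of data values D is taken to be nat. *)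
Definition data := nat.

Definition dword (Sigma : Type) := list (Sigma * data).

(* Sets are h_0 .. h_(m-1), indexed by 'I_m.
   Condition p(h_i) is (true, i), !p(h_i) is (false, i).
   Operation '-' is None, ins(h_j) is Some j.
   A transition (q, a, alpha, op, q'). *)
Record SAFA (Sigma : finType) := {
  safa_Q : finType;
  safa_q0 : safa_Q;
  safa_F : {set safa_Q};
  safa_m : nat;
  safa_delta : list (safa_Q * Sigma * (bool * 'I_safa_m) * option 'I_safa_m * safa_Q)
}.

(* Contents of the sets: S i d means d belongs to S_i. *)
Definition safa_upd (m : nat) (S : 'I_m -> data -> bool) (op : option 'I_m) (d : data)
  : 'I_m -> data -> bool :=
  match op with
  | None => S
  | Some j => fun i x => S i x || ((i == j) && (x == d))
  end.

Definition safa_cond (m : nat) (S : 'I_m -> data -> bool) (c : bool * 'I_m) (d : data) : bool :=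
  if c.1 then S c.2 d else ~~ S c.2 d.

Fixpoint safa_acc (Sigma : finType) (M : SAFA Sigma) (q : safa_Q M)
  (S : 'I_(safa_m M) -> data -> bool) (w : dword Sigma) : Prop :=
  match w with
  | nil => q \in safa_F M
  | (a, d) :: w' =>
      exists (alpha : bool * 'I_(safa_m M)) (op : option 'I_(safa_m M)) (q' : safa_Q M),
        In (q, a, alpha, op, q') (safa_delta M) /\
        safa_cond S alpha d /\
        @safa_acc Sigma M q' (safa_upd S op d) w'
  end.

Definition safa_lang (Sigma : finType) (M : SAFA Sigma) (w : dword Sigma) : Prop :=
  @safa_acc Sigma M (safa_q0 M) (fun _ _ => false) w.

Inductive cmp_op := CLt | CGt | CEq | CLe | CGe | CNe.

Definition cmp_sem (o : cmp_op) (x e : nat) : bool :=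
  match o with
  | CLt => x < e
  | CGt => x > e
  | CEq => x == e
  | CLe => x <= e
  | CGe => x >= e
  | CNe => x != e
  end.

(* Instruction: IncBy = up-arrow^+ (increase by m), Reset = down-arrow (reset to m). *)
Inductive cca_inst := IncBy | Reset.

Record CCA (Sigma : finType) := {
  cca_Q : finType;
  cca_q0 : cca_Q;
  cca_F : {set cca_Q};
  cca_delta : list (cca_Q * Sigma * (cmp_op * nat) * cca_inst * nat * cca_Q)
}.

Definition bag_upd (beta : data -> nat) (d : data) (ins : cca_inst) (m : nat) : data -> nat :=
  fun x => if x == d then (match ins with IncBy => beta d + m | Reset => m end) else beta x.

Fixpoint cca_acc (Sigma : finType) (A : CCA Sigma) (q : cca_Q A)
  (beta : data -> nat) (w : dword Sigma) : Prop :=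
  match w with
  | nil => q \in cca_F A
  | (a, d) :: w' =>
      exists (c : cmp_op * nat) (ins : cca_inst) (m : nat) (q' : cca_Q A),
        In (q, a, c, ins, m, q') (cca_delta A) /\
        cmp_sem c.1 (beta d) c.2 /\
        @cca_acc Sigma A q' (bag_upd beta d ins m) w'
  end.

Definition cca_lang (Sigma : finType) (A : CCA Sigma) (w : dword Sigma) : Prop :=
  @cca_acc Sigma A (cca_q0 A) (fun _ => 0) w.

(* Main.v *)
Require Import Defs.
From mathcomp Require Import all_boot zify.
From Stdlib Require List.
From Stdlib Require Import FunctionalExtensionality.
Import List.ListNotations.
Set Implicit Arguments. Unset Strict Implicit. Unset Printing Implicit Defensive.
Notation In := List.In.
Notation flat_map := List.flat_map.
Notation in_flat_map := List.in_flat_map.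

Lemma In_of_mem (T : eqType) (x : T) (s : seq T) : x \in s -> In x s.
Proof. elim: s => //= y s IH; rewrite in_cons => /orP [/eqP ->|/IH]; auto. Qed.

Definition vec (m : nat) := {ffun 'I_m -> bool}.
Definition v0 (m : nat) : vec m := [ffun _ => false].
Definition rk (m : nat) (v : vec m) : nat :=
  if v == v0 m then 0 else (enum_rank v).+1.

Lemma rk_inj m : injective (@rk m).
Proof.
move=> v w; rewrite /rk.
case: eqP => [->|_]; case: eqP => [->|_] //.
by case=> /ord_inj /enum_rank_inj.
Qed.

Definition code (m : nat) (S : 'I_m -> data -> bool) (x : data) : vec m :=
  [ffun i => S i x].
Definition vupd (m : nat) (v : vec m) (op : option 'I_m) : vec m :=
  match op with None => v | Some j => [ffun i => v i || (i == j)] end.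
Definition condv (m : nat) (v : vec m) (al : bool * 'I_m) : bool :=
  if al.1 then v al.2 else ~~ v al.2.

Definition trans_of (Sigma : finType) (M : SAFA Sigma)
  (t : safa_Q M * Sigma * (bool * 'I_(safa_m M)) * option 'I_(safa_m M) * safa_Q M)
  : list (safa_Q M * Sigma * (cmp_op * nat) * cca_inst * nat * safa_Q M) :=
  let: (q, a, al, op, q') := t in
  flat_map (fun v : vec (safa_m M) =>
    if condv v al then (q, a, (CEq, rk v), Reset, rk (vupd v op), q') :: nil else nil)
    (enum {ffun 'I_(safa_m M) -> bool}).

Definition cca_of (Sigma : finType) (M : SAFA Sigma) : CCA Sigma :=
  {| cca_Q := safa_Q M; cca_q0 := safa_q0 M; cca_F := safa_F M;
     cca_delta := flat_map (@trans_of Sigma M) (safa_delta M) |}.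

Definition Inv m (beta : data -> nat) (S : 'I_m -> data -> bool) :=
  forall x, beta x = rk (code S x).

Lemma Inv_upd m beta (S : 'I_m -> data -> bool) d op :
  Inv beta S ->
  Inv (bag_upd beta d Reset (rk (vupd (code S d) op))) (safa_upd S op d).
Proof.
move=> H x; rewrite /bag_upd; case: eqP => [->|nx].
  congr rk; apply/ffunP => i; rewrite /code /vupd /safa_upd.
  by case: op => [j|]; rewrite !ffunE // eqxx andbT.
rewrite H; congr rk; apply/ffunP => i; rewrite /code /safa_upd.
case: op => [j|]; rewrite !ffunE //.
by have /eqP/negbTE -> := nx; rewrite andbF orbF.
Qed.

Lemma fwd (Sigma : finType) (M : SAFA Sigma) w : forall q S beta,
  safa_acc q S w -> Inv beta S -> @cca_acc Sigma (cca_of M) q beta w.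
Proof.
elim: w => [|[a d] w IH] q S beta //=.
move=> [al [op [q' [Hin [Hc Hacc]]]]] HI.
exists (CEq, rk (code S d)), Reset, (rk (vupd (code S d) op)), q'.
split; [|split].
- apply/in_flat_map; exists (q, a, al, op, q'); split => //=.
  apply/in_flat_map; exists (code S d); split; first by apply: In_of_mem; rewrite mem_enum.
  have -> : condv (code S d) al = true.
    by move: Hc; rewrite /condv /safa_cond /code ffunE.
  by left.
- by rewrite /= HI.
- by apply: IH Hacc _; apply: Inv_upd.
Qed.

Lemma bwd (Sigma : finType) (M : SAFA Sigma) w : forall q S beta,
  @cca_acc Sigma (cca_of M) q beta w -> Inv beta S -> safa_acc q S w.
Proof.
elim: w => [|[a d] w IH] q S beta //=.
move=> [c [ins [mm [q' [Hin [Hc Hacc]]]]]] HI.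
move/in_flat_map: Hin => [[[[[q0 a0] al] op] q0'] [Hin Hin2]].
move: Hin2 => /= /in_flat_map [v [_ Hv]].
move: Hv; case Hcv: (condv v al) => //= -[] // [] Eq Ea Ec Ei Em Eq'.
subst.
move: Hc => /= /eqP; rewrite HI => /rk_inj Ev.
exists al, op, q'; split => //; split.
  by move: Hcv; rewrite -Ev /condv /safa_cond /code ffunE.
by apply: IH Hacc _; rewrite -Ev; apply: Inv_upd.
Qed.

Lemma part1 (Sigma : finType) (M : SAFA Sigma) :
  exists A : CCA Sigma, forall w : dword Sigma, cca_lang A w <-> safa_lang M w.
Proof.
exists (cca_of M) => w; have HI : Inv (fun _ => 0) (fun (_ : 'I_(safa_m M)) (_ : data) => false).
  move=> x; rewrite /rk; have -> : code (fun (_ : 'I_(safa_m M)) (_ : data) => false) x = v0 (safa_m M) by apply/ffunP => i; rewrite /code /v0 !ffunE.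
  by rewrite eqxx.
split; [move=> H; exact: bwd H HI | move=> H; exact: fwd H HI].
Qed.

Definition Aw (b : bool) (s n : nat) : seq (bool * nat) := map (fun k => (b, k)) (iota s n).
Definition cyc (K : nat) := Aw true 0 K ++ Aw false 0 K.
Fixpoint cpow (K r : nat) : seq (bool * nat) :=
  match r with 0 => [::] | r'.+1 => cyc K ++ cpow K r' end.

Definition A2 : CCA bool :=
  {| cca_Q := unit; cca_q0 := tt; cca_F := setT;
     cca_delta := [:: (tt, true, (CEq, 0), Reset, 1, tt); (tt, false, (CEq, 1), Reset, 0, tt)] |}.

Lemma phase b e e' w n : forall s beta,
  In (tt, b, (CEq, e), Reset, e', tt) (cca_delta A2) ->
  (forall v, s <= v < s + n -> beta v = e) ->
  @cca_acc bool A2 tt (fun x => if s <= x < s + n then e' else beta x) w ->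
  @cca_acc bool A2 tt beta (Aw b s n ++ w).
Proof.
elim: n => [|n IH] s beta Hin Hb Hw.
  have E : (fun x => if s <= x < s + 0 then e' else beta x) = beta.
    by apply: functional_extensionality => x; case: ifP => // H; lia.
  by rewrite -E.
rewrite /Aw /=; exists (CEq, e), Reset, e', tt; split => //; split.
  by rewrite /= Hb //; lia.
apply: IH => //.
  move=> v Hv; rewrite /bag_upd; case: eqP => [E|_]; first lia.
  by apply: Hb; lia.
set f := fun x => _; set g := fun x => _ in Hw.
have -> : f = g; last exact: Hw.
apply: functional_extensionality => x; rewrite /f /g /bag_upd.
case: (eqVneq x s) => [->|nx]; first by rewrite ltnn /= leqnn addnS ltnS leq_addr.
by case: ifP => H1; case: ifP => H2 //; lia.
Qed.

Lemma cyc_acc K w : @cca_acc bool A2 tt (fun _ => 0) w ->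
  @cca_acc bool A2 tt (fun _ => 0) (cyc K ++ w).
Proof.
move=> H; rewrite /cyc -catA; apply: (@phase true 0 1) => //=; first by left.
apply: (@phase false 1 0) => //=; first by right; left.
  by move=> v ->.
match goal with |- cca_acc _ ?f _ => have -> : f = (fun _ => 0) end; last exact: H.
by apply: functional_extensionality => x; case: ifP => //= ->.
Qed.

Lemma cpow_acc K r w : @cca_acc bool A2 tt (fun _ => 0) w ->
  @cca_acc bool A2 tt (fun _ => 0) (cpow K r ++ w).
Proof. elim: r => //= r IH H; rewrite -catA; exact: cyc_acc (IH H). Qed.

Lemma cnt w1 : forall w2 q beta, @cca_acc bool A2 q beta (w1 ++ w2) ->
  forall v, count_mem (false, v) w1 <= beta v + count_mem (true, v) w1.
Proof.
elim: w1 => [|[x d] w1 IH] w2 q beta //=.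
move=> [c [ins [mm [q' [Hin [Hc Hacc]]]]]] v.
have := IH _ _ _ Hacc v; rewrite /bag_upd.
case: Hin => [E|[E|[]]]; case: E => Ex Ec Ei Em Eq; subst => /=; move: Hc => /= /eqP Hc;
  rewrite !xpair_eqE /=; case: (eqVneq v d) => [->|nv]; rewrite ?eqxx /=; try lia.
Qed.

Lemma count_Aw b b' v s n :
  count_mem (b', v) (Aw b s n) = (b == b') && (s <= v < s + n).
Proof.
rewrite /Aw count_uniq_mem; last by rewrite map_inj_uniq ?iota_uniq // => x y [].
congr (nat_of_bool _); apply/idP/idP.
  by case/mapP => k Hk [-> ->]; rewrite eqxx /= -mem_iota.
case/and3P => /eqP -> H1 H2; apply/mapP; exists v => //.
by rewrite mem_iota H1 H2.
Qed.

Lemma count_cpow b v K r : count_mem (b, v) (cpow K r) = r * (v < K).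
Proof.
elim: r => //= r IH; rewrite count_cat IH /cyc count_cat !count_Aw.
by case: b {IH} => /=; rewrite mulSn; lia.
Qed.

Fixpoint reach (Sigma : finType) (M : SAFA Sigma) (q : safa_Q M)
  (S : 'I_(safa_m M) -> data -> bool) (w : dword Sigma)
  (q' : safa_Q M) (S' : 'I_(safa_m M) -> data -> bool) : Prop :=
  match w with
  | nil => q' = q /\ S' = S
  | (a, d) :: w' =>
      exists (alpha : bool * 'I_(safa_m M)) (op : option 'I_(safa_m M)) (q'' : safa_Q M),
        In (q, a, alpha, op, q'') (safa_delta M) /\
        safa_cond S alpha d /\
        @reach Sigma M q'' (safa_upd S op d) w' q' S'
  end.


Lemma acc_split (Sigma : finType) (M : SAFA Sigma) w1 w2 : forall q S,
  safa_acc q S (w1 ++ w2) -> exists q' S', @reach Sigma M q S w1 q' S' /\ safa_acc q' S' w2.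
Proof.
elim: w1 => [|[a d] w1 IH] q S /=; first by move=> H; exists q, S.
move=> [al [op [q'' [Hin [Hc H]]]]].
have [q' [S' [H1 H2]]] := IH _ _ H.
by exists q', S'; split => //; exists al, op, q''.
Qed.

Lemma acc_join (Sigma : finType) (M : SAFA Sigma) w1 w2 : forall q S q' S',
  @reach Sigma M q S w1 q' S' -> safa_acc q' S' w2 -> safa_acc q S (w1 ++ w2).
Proof.
elim: w1 => [|[a d] w1 IH] q S q' S' /=; first by move=> [-> ->].
move=> [al [op [q'' [Hin [Hc H]]]]] H2.
by exists al, op, q''; split => //; split => //; apply: IH H H2.
Qed.

Lemma reach_split (Sigma : finType) (M : SAFA Sigma) w1 w2 : forall q S q2 S2,
  @reach Sigma M q S (w1 ++ w2) q2 S2 ->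
  exists q1 S1, reach q S w1 q1 S1 /\ reach q1 S1 w2 q2 S2.
Proof.
elim: w1 => [|[a d] w1 IH] q S q2 S2 /=; first by move=> H; exists q, S.
move=> [al [op [q'' [Hin [Hc H]]]]].
have [q' [S' [H1 H2]]] := IH _ _ _ _ H.
by exists q', S'; split => //; exists al, op, q''.
Qed.

Lemma reach_join (Sigma : finType) (M : SAFA Sigma) w1 w2 : forall q S q1 S1 q2 S2,
  @reach Sigma M q S w1 q1 S1 -> reach q1 S1 w2 q2 S2 -> reach q S (w1 ++ w2) q2 S2.
Proof.
elim: w1 => [|[a d] w1 IH] q S q1 S1 q2 S2 /=; first by move=> [-> ->].
move=> [al [op [q'' [Hin [Hc H]]]]] H2.
by exists al, op, q''; split => //; split => //; apply: IH H H2.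
Qed.

Definition subS m (S T : 'I_m -> data -> bool) := forall i x, S i x -> T i x.

Lemma upd_mono m (S : 'I_m -> data -> bool) op d : subS S (safa_upd S op d).
Proof. by case: op => [j|] i x //= ->. Qed.

Lemma reach_mono (Sigma : finType) (M : SAFA Sigma) w : forall q S q' S',
  @reach Sigma M q S w q' S' -> subS S S'.
Proof.
elim: w => [|[a d] w IH] q S q' S' /=; first by move=> [_ ->].
move=> [al [op [q'' [_ [_ H]]]]] i x Hx; apply: (IH _ _ _ _ H).
exact: upd_mono.
Qed.

Lemma reach_supp (Sigma : finType) (M : SAFA Sigma) w : forall q S q' S',
  @reach Sigma M q S w q' S' -> forall i x, S' i x -> S i x || (x \in map snd w).
Proof.
elim: w => [|[a d] w IH] q S q' S' /=; first by move=> [_ ->] i x ->.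
move=> [al [op [q'' [_ [_ H]]]]] i x Hx.
move: (IH _ _ _ _ H i x Hx); rewrite in_cons.
case: op {H} => [j|] /=; last by case/orP => ->; rewrite ?orbT.
case/orP => [/orP [->//|/andP [_ ->]]|->]; by rewrite ?orbT.
Qed.

Lemma subS_antisym m (S T : 'I_m -> data -> bool) : subS S T -> subS T S -> S = T.
Proof.
move=> H1 H2; apply: functional_extensionality => i; apply: functional_extensionality => x.
by apply/idP/idP; [apply: H1 | apply: H2].
Qed.

Definition mu m K (S : 'I_m -> data -> bool) := #|[set p : 'I_m * 'I_K | S p.1 p.2]|.

Lemma mu_le m K S : @mu m K S <= m * K.
Proof. by rewrite /mu (leq_trans (max_card _)) // card_prod !card_ord. Qed.

Lemma mu_mono m K S T : subS S T -> @mu m K S <= mu K T.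
Proof. by move=> H; apply: subset_leq_card; apply/subsetP => p; rewrite !inE; apply: H. Qed.

Lemma mu_eq m K S T : subS S T -> @mu m K T <= mu K S ->
  forall i k, k < K -> T i k -> S i k.
Proof.
move=> H Hle i k Hk HT.
have /eqP E : [set p : 'I_m * 'I_K | S p.1 p.2] == [set p : 'I_m * 'I_K | T p.1 p.2].
  rewrite eqEcard Hle andbT; apply/subsetP => p; rewrite !inE; apply: H.
have : ((i, Ordinal Hk) \in [set p : 'I_m * 'I_K | T p.1 p.2]) by rewrite inE.
by rewrite -E inE.
Qed.

Lemma snd_Aw b s n : map snd (Aw b s n) = iota s n.
Proof. by rewrite /Aw -map_comp map_id. Qed.

Lemma cyc_vals K x : x \in map snd (cyc K) -> x < K.
Proof. by rewrite /cyc map_cat !snd_Aw mem_cat !mem_iota /= orbb. Qed.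

Lemma select (M : SAFA bool) K j : forall (q : safa_Q M) (S : 'I_(safa_m M) -> data -> bool) (tail : dword bool),
  (forall i x, S i x -> x < K) -> safa_m M * K < mu K S + j ->
  safa_acc q S (cpow K j ++ tail) ->
  exists r q1 S1 q2, reach q S (cpow K r) q1 S1 /\ @reach bool M q1 S1 (cyc K) q2 S1 /\
    safa_acc q2 S1 (cpow K (j - r.+1) ++ tail).
Proof.
elim: j => [|j IH] q S tail Hs Hj.
  by move: Hj; rewrite addn0 ltnNge mu_le.
rewrite /= -catA => /acc_split [q' [S' [Hr Ha]]].
have Hm := reach_mono Hr.
have Hs' : forall i x, S' i x -> x < K.
  move=> i x /(reach_supp Hr) /orP [/Hs //|]; exact: cyc_vals.
case: (ltnP (mu K S) (mu K S')) => Hlt.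
  have Hj' : safa_m M * K < mu K S' + j.
    by apply: (leq_trans Hj); rewrite addnS ltn_add2r.
  have [r [q1 [S1 [q2 [H1 [H2 H3]]]]]] := IH q' S' tail Hs' Hj' Ha.
  exists r.+1, q1, S1, q2; split; last by split.
  by apply: reach_join Hr H1.
have E : S' = S.
  apply: subS_antisym => // i x HS'.
  case: (ltnP x K) => Hx; first exact: (mu_eq Hm Hlt Hx HS').
  by move: (reach_supp Hr HS') => /orP [//|/cyc_vals]; rewrite ltnNge Hx.
subst S'.
exists 0, q, S, q'; split => //; split => //.
by rewrite subSS subn0.
Qed.

Lemma Aw_S b s : Aw b 0 s.+1 = Aw b 0 s ++ [:: (b, s)].
Proof. by rewrite /Aw -addn1 iotaD map_cat. Qed.

Lemma found_case (M : SAFA bool) K (q1 q q2 : safa_Q M) S1 (rest : dword bool) p0 s n :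
  reach q1 S1 (Aw true 0 p0) q S1 -> reach q S1 (Aw true s n ++ Aw false 0 K) q2 S1 ->
  s + n = K -> safa_acc q2 S1 rest ->
  safa_acc q1 S1 (Aw true 0 p0 ++ Aw true s (K - s) ++ Aw false 0 K ++ rest).
Proof.
move=> Hr0 H2 Hsn Hfin; have -> : K - s = n by lia.
refine (acc_join Hr0 _); rewrite catA; exact: (acc_join H2 Hfin).
Qed.

Lemma cut (M : SAFA bool) K (HK : #|safa_Q M| = K) (q1 : safa_Q M) S1 q2 (rest : dword bool)
  (Hfin : safa_acc q2 S1 rest) : forall n s q S (hist : seq (safa_Q M * nat)),
  s + n = K -> reach q1 S1 (Aw true 0 s) q S ->
  reach q S (Aw true s n ++ Aw false 0 K) q2 S1 ->
  uniq (map fst hist) -> size hist = s ->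
  (forall qp, qp \in hist -> qp.2 < s /\ reach q1 S1 (Aw true 0 qp.2) qp.1 S1) ->
  exists p1 p2, p1 < p2 <= K /\
    safa_acc q1 S1 (Aw true 0 p1 ++ Aw true p2 (K - p2) ++ Aw false 0 K ++ rest).
Proof.
elim=> [|n IH] s q S hist Hsn H1 H2 Hu Hsz Hh;
  (have ES : S = S1 by apply: subS_antisym; [exact: (reach_mono H2) | exact: (reach_mono H1)]);
  subst S.
all: case Hq: (q \in map fst hist).
1,3: move/mapP: Hq => [[q0 p0] Hin /= Eq]; subst q0;
     have [Hp0 Hr0] := Hh _ Hin;
     exists p0, s; (split; first by apply/andP; split => //; lia);
     simpl in Hr0, Hp0; exact: (found_case Hr0 H2 Hsn Hfin).
- exfalso; have : uniq (q :: map fst hist) by rewrite /= Hq Hu.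
  move/card_uniqP; rewrite /= size_map Hsz => E.
  by move: (max_card (mem (q :: map fst hist))); rewrite E HK; lia.
- move: H2; rewrite /Aw /= -/(Aw true s.+1 n) => H2.
  have [q' [S' [Ha Hb]]] := @reach_split _ _ [:: (true, s)] _ _ _ _ _ H2.
  apply: (IH s.+1 q' S' ((q, s) :: hist)) => //.
  + by lia.
  + by rewrite Aw_S; apply: reach_join H1 Ha.
  + by rewrite /= Hq Hu.
  + by rewrite /= Hsz.
  + move=> qp; rewrite in_cons => /orP [/eqP -> /=|/Hh [Ha1 Ha2]]; split => //.
    by apply: ltnW.
Qed.

Lemma part2 : exists (Sigma : finType) (A : CCA Sigma),
  forall M : SAFA Sigma, ~ (forall w : dword Sigma, safa_lang M w <-> cca_lang A w).
Proof.
exists bool, A2 => M Hiff.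
set K := #|safa_Q M|; set m := safa_m M.
have Hu : safa_lang M (cpow K (m * K).+1 ++ cyc K).
  apply/Hiff; rewrite /cca_lang; apply: cpow_acc; rewrite -[cyc K]cats0.
  by apply: cyc_acc; rewrite /= inE.
have [r [q1 [S1 [q2 [Hr [Hc Ha]]]]]] :=
  @select M K (m * K).+1 (safa_q0 M) (fun _ _ => false) (cyc K) (fun _ _ H => ltac:(done))
    ltac:(by rewrite addnS ltnS leq_addl) Hu.
have [p1 [p2 [/andP [Hp12 Hp2] Hacc]]] :=
  @cut M K erefl q1 S1 q2 _ Ha K 0 q1 S1 [::] (add0n K) (conj erefl erefl) Hc erefl erefl
    (fun qp H => ltac:(done)).
have Hw := acc_join Hr Hacc.
have E : forall a b c d e : seq (bool * nat), a ++ b ++ c ++ d ++ e = (a ++ b ++ c ++ d) ++ e.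
  by move=> *; rewrite !catA.
move/Hiff: Hw; rewrite /cca_lang (E (cpow K r) (Aw true 0 p1) (Aw true p2 (K - p2)) (Aw false 0 K)) => Hw.
have := @cnt (cpow K r ++ Aw true 0 p1 ++ Aw true p2 (K - p2) ++ Aw false 0 K) _ _ _ Hw p1.
rewrite !count_cat !count_cpow !count_Aw /=.
have Hp1K : p1 < K by apply: leq_trans Hp2.
rewrite !add0n Hp1K ltnn (leqNgt p2 p1) Hp12 /=; lia.
Qed.

Theorem theorem17 :
  (forall (Sigma : finType) (M : SAFA Sigma),
      exists A : CCA Sigma, forall w : dword Sigma, cca_lang A w <-> safa_lang M w)
  /\
  (exists (Sigma : finType) (A : CCA Sigma),
      forall M : SAFA Sigma, ~ (forall w : dword Sigma, safa_lang M w <-> cca_lang A w)).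
Proof. split; [exact: part1 | exact: part2]. Qed.
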